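(* Let $k \geqslant 2$, $\ell \geqslant 0$, and let $A$ and $N$ be as defined in the context. Then $A$ accepts the string $a_1 a_2 \cdots a_{N-1}$.
   Context: A 2DFA $(\Sigma, Q, q_0, \delta, F)$: $\Sigma$ is a finite alphabet not containing end-markers $\vdash, \dashv$; $Q$ finite set of states; $q_0 \in Q$ initial; $\delta: Q \times (\Sigma \cup \{\vdash,\dashv\}) \to Q \times \{-1,+1\}$ partial; $F \subseteq Q$ accepting. On input $w = b_1\cdots b_m$ it works on tape $\vdash b_1 \cdots b_m \dashv$, starting at $\vdash$ in $q_0$; if $\delta(q,c)=(r,d)$ it enters $r$ and moves one cell in direction $d$; if undefined it rejects; it accepts if it ever arrives at $\dashv$ in a state of $F$; it may loop. Construction of $A$. Fix $k \geqslant 2$, $\ell \geqslant 0$, $Q^+ = \{1, \ldots, k\}$, $Q^- = \{1', \ldots, \ell'\}$, ordered by $i < j$ and $i' < j'$ iff $i < j$. A pair is $(P,R)$ with $P \subseteq Q^-$, $R \subseteq Q^+$, $|R| = |P|+1$. Writing $P = \{p_1 < \cdots < p_m\}$ and $R = \{r_1 < \cdots < r_{m+1}\}$, the sequence of the pair is the integer sequence $(r_1, -p_1, r_2, -p_2, \ldots, r_m, -p_m, r_{m+1})$, where a primed state $i'$ contributes the integer $i$ (so $-p_j$ for $p_j = i'$ is the integer $-i$). Pairs are ordered by the lexicographic order of their sequences (a proper prefix is smaller). Let $N = \binom{k+\ell}{\ell+1}$ be the number of pairs and enumerate them increasingly as $(P^{(1)},R^{(1)}) < \cdots < (P^{(N)},R^{(N)})$,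 with $P^{(i)} = \{p^{(i)}_1 < \cdots < p^{(i)}_{m_i}\}$ and $R^{(i)} = \{r^{(i)}_1 < \cdots < r^{(i)}_{m_i+1}\}$; in particular $(P^{(1)},R^{(1)}) = (\emptyset,\{1\})$ and $(P^{(N)},R^{(N)}) = (\emptyset,\{k\})$. The 2DFA $A$ has alphabet $\Sigma = \{a_1, \ldots, a_{N-1}\}$ (distinct symbols), states $Q = Q^+ \cup Q^-$, initial state $q_0 = 1$, accepting states $F = \{k\}$, and exactly the following transitions: $\delta(1, \vdash) = (r^{(1)}_1, +1)$; and for each $i \in \{1,\ldots,N-1\}$: $\delta(r^{(i)}_j, a_i) = (p^{(i)}_j, -1)$ for $j = 1, \ldots, m_i$; $\delta(r^{(i)}_{m_i+1}, a_i) = (r^{(i+1)}_1, +1)$; $\delta(p^{(i+1)}_j, a_i) = (r^{(i+1)}_{j+1}, +1)$ for $j = 1, \ldots, m_{i+1}$. No transitions are defined at $\dashv$. *)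

(* Defs.v *)
From mathcomp Require Import all_boot all_order all_algebra.
Set Implicit Arguments. Unset Strict Implicit. Unset Printing Implicit Defensive.
Import GRing.Theory Num.Theory.
Local Open Scope ring_scope.

Inductive tsym (S : Type) := LEnd | REnd | Sym of S.
Arguments LEnd {S}. Arguments REnd {S}.

(** A 2DFA over state type [Q] and letters [S]; the direction [true] is +1,
    [false] is -1; [delta] is partial (None = undefined). *)
Record twoDFA (Q S : Type) := Mk2DFA {
  q_init : Q;
  delta : Q -> tsym S -> option (Q * bool);
  final : Q -> bool }.

(** Configurations: (state, head position) on the tape
    |- b_1 ... b_m -|, positions 0 .. m+1. *)
Definition tape_at (S : Type) (w : seq S) (pos : nat) : option (tsym S) :=
  if pos == 0%N then Some LEnd
  else if pos == (size w).+1 then Some REnd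
  else if (pos <= size w)%N then
    (if drop pos.-1 w is b :: _ then Some (Sym b) else None)
  else None.

Definition step (Q S : Type) (M : twoDFA Q S) (w : seq S) (c : Q * nat)
  : option (Q * nat) :=
  let: (q, pos) := c in
  match tape_at w pos with
  | None => None
  | Some a =>
    match delta M q a with
    | None => None
    | Some (r, d) =>
        if d then Some (r, pos.+1)
        else if pos is p.+1 then Some (r, p) else None
    end
  end.

Fixpoint run (Q S : Type) (M : twoDFA Q S) (w : seq S) (n : nat)
  : option (Q * nat) :=
  match n with
  | 0%N => Some (q_init M, 0%N)
  | n'.+1 => if run M w n' is Some c then step M w c else None
  end.

Definition accepts (Q S : Type) (M : twoDFA Q S) (w : seq S) : Prop :=
  exists n q, run M w n = Some (q, (size w).+1) /\ final M q.

(** Subsets of a duplicate-free list, each listed in the order of the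
    original list (so subsets of [iota 1 n] are increasing lists). *)
Fixpoint subsets (s : seq nat) : seq (seq nat) :=
  if s is x :: s' then
    let r := subsets s' in [seq x :: t | t <- r] ++ r
  else [:: [::]].

(** The integer sequence (r_1, -p_1, r_2, ..., -p_m, r_{m+1}) of a pair,
    given P and R as increasing lists. *)
Fixpoint interleave (R P : seq nat) : seq int :=
  if R is r :: R' then
    (r%:Z) :: (if P is p :: P' then - (p%:Z) :: interleave R' P' else [::])
  else [::].

Definition pair_seq (pr : seq nat * seq nat) : seq int :=
  interleave pr.2 pr.1.

Fixpoint lexle (s t : seq int) : bool :=
  match s, t with
  | [::], _ => true
  | _ :: _, [::] => false
  | x :: s', y :: t' => (x < y) || ((x == y) && lexle s' t')
  end.

(** All pairs (P, R): P ⊆ Q^- = {1',...,l'} (primed state i' encoded by i),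
    R ⊆ Q^+ = {1,...,k}, |R| = |P| + 1. *)
Definition all_pairs (k l : nat) : seq (seq nat * seq nat) :=
  [seq pr <- [seq (P, R) | P <- subsets (iota 1 l), R <- subsets (iota 1 k)]
   | size pr.2 == (size pr.1).+1].

Definition sorted_pairs (k l : nat) : seq (seq nat * seq nat) :=
  sort (fun a b => lexle (pair_seq a) (pair_seq b)) (all_pairs k l).

Definition Npairs (k l : nat) : nat := size (sorted_pairs k l).

(** (P^(i), R^(i)), 1-indexed. *)
Definition pairP (k l i : nat) : seq nat := (nth ([::], [::]) (sorted_pairs k l) i.-1).1.
Definition pairR (k l i : nat) : seq nat := (nth ([::], [::]) (sorted_pairs k l) i.-1).2.

(** States: (true, i) is i ∈ Q^+, (false, i) is i' ∈ Q^-.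
    Letters: the natural number i stands for a_i (1 <= i <= N-1). *)
Definition stateA := (bool * nat)%type.

Definition deltaA (k l : nat) (q : stateA) (c : tsym nat) : option (stateA * bool) :=
  match c with
  | LEnd => if q == (true, 1%N) then Some ((true, nth 0%N (pairR k l 1) 0), true)
            else None
  | REnd => None
  | Sym i =>
    if (1 <= i <= (Npairs k l).-1)%N then
      let P := pairP k l i in let R := pairR k l i in
      let P' := pairP k l i.+1 in let R' := pairR k l i.+1 in
      match q with
      | (true, r) =>
          if r \in R then
            let j := index r R in
            if (j < size P)%N then Some ((false, nth 0%N P j), false)
            else Some ((true, nth 0%N R' 0), true)
          else None
      | (false, p) =>
          if p \in P' then Some ((true, nth 0%N R' (index p P').+1), true)
          else None
      end
    else None
  end.

Definition A (k l : nat) : twoDFA stateA nat :=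
  {| q_init := (true, 1%N);
     delta := deltaA k l;
     final := fun q => q == (true, k) |}.

(* Main.v *)
Require Import Defs.
From mathcomp Require Import all_boot all_order all_algebra.
From mathcomp Require Import zify.
Import Order.TTheory GRing.Theory Num.Theory.

Lemma lexle_refl : reflexive lexle.
Proof. by elim=> //= x s ->; rewrite eqxx orbT. Qed.

Lemma lexle_total : total lexle.
Proof.
elim=> [|x s IH] [|y t] //=.
case: (ltgtP x y) => //= ->; rewrite eqxx /=; exact: IH.
Qed.

Lemma lexle_trans : transitive lexle.
Proof.
move=> t s; elim: s t => [|x s IH] [|y t] [|z u] //=.
case/orP=> [lt1|/andP[/eqP e1 l1]]; case/orP=> [lt2|/andP[/eqP e2 l2]].
- by rewrite (lt_trans lt1 lt2).
- by rewrite -e2 lt1.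
- by rewrite e1 lt2.
- by rewrite e1 e2 eqxx (IH _ _ l1 l2) orbT.
Qed.

Lemma subsets_subseq s t : t \in subsets s -> subseq t s.
Proof.
elim: s t => [|x s IH] t /=; first by rewrite inE => /eqP ->.
rewrite mem_cat => /orP[/mapP[u /IH su ->]|/IH su] /=.
  by rewrite eqxx.
exact: subseq_trans su (subseq_cons s x).
Qed.

Lemma nil_subsets s : [::] \in subsets s.
Proof. by elim: s => [|x s IH] //=; rewrite mem_cat IH orbT. Qed.

Lemma single_subsets s x : x \in s -> [:: x] \in subsets s.
Proof.
elim: s => [|y s IH] //=; rewrite inE mem_cat => /orP[/eqP ->|/IH ->].
  by apply/orP; left; apply/mapP; exists [::] => //; exact: nil_subsets.
by rewrite orbT.
Qed.

Definition lerp (a b : seq nat * seq nat) := lexle (pair_seq a) (pair_seq b).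

Lemma lerp_trans : transitive lerp.
Proof. move=> b a c; exact: lexle_trans. Qed.
Lemma lerp_refl : reflexive lerp.
Proof. move=> a; exact: lexle_refl. Qed.
Lemma lerp_total : total lerp.
Proof. move=> a b; exact: lexle_total. Qed.

Lemma in_all_pairs k l pr : pr \in all_pairs k l ->
  [/\ uniq pr.1, uniq pr.2, size pr.2 = (size pr.1).+1 &
      forall x, x \in pr.2 -> 1 <= x <= k].
Proof.
rewrite mem_filter => /andP[/eqP hs /allpairsP[[P R] []]].
rewrite /= => hP hR e; subst pr; move: hs; rewrite /= => hs.
have sP := subsets_subseq _ _ hP; have sR := subsets_subseq _ _ hR.
split => //.
- exact: subseq_uniq sP (iota_uniq _ _).
- exact: subseq_uniq sR (iota_uniq _ _).
- move=> x /(mem_subseq sR); rewrite mem_iota; lia.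
Qed.

Lemma mem_all_pairs k l x : 1 <= x <= k -> ([::], [:: x]) \in all_pairs k l.
Proof.
move=> hx; rewrite mem_filter /=.
apply: (allpairs_f (fun P R => (P, R))); first exact: nil_subsets.
by apply: single_subsets; rewrite mem_iota; lia.
Qed.

Lemma sorted_L k l : sorted lerp (sorted_pairs k l).
Proof. exact: (sort_sorted lerp_total). Qed.

Lemma pair_props k l i : 1 <= i <= Npairs k l ->
  [/\ uniq (pairP k l i), uniq (pairR k l i),
      size (pairR k l i) = (size (pairP k l i)).+1 &
      forall x, x \in pairR k l i -> 1 <= x <= k].
Proof.
move=> hi; rewrite /pairP /pairR; apply: (in_all_pairs k l).
have : nth ([::], [::]) (sorted_pairs k l) i.-1 \in sorted_pairs k l.
  by apply: mem_nth; case: i hi.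
by rewrite /sorted_pairs mem_sort.
Qed.

Lemma N_ge2 k l : 2 <= k -> 2 <= Npairs k l.
Proof.
move=> hk; rewrite /Npairs.
have h1 : ([::], [:: 1]) \in sorted_pairs k l.
  by rewrite /sorted_pairs mem_sort; apply: mem_all_pairs; lia.
have hkk : ([::], [:: k]) \in sorted_pairs k l.
  by rewrite /sorted_pairs mem_sort; apply: mem_all_pairs; lia.
case E: (sorted_pairs k l) h1 hkk => [|a [|b s]] //.
rewrite !inE => /eqP <- /eqP [] e; lia.
Qed.

Lemma first_P k l : 2 <= k -> pairP k l 1 = [::].
Proof.
move=> hk.
have h1 : ([::], [:: 1]) \in sorted_pairs k l.
  by rewrite /sorted_pairs mem_sort; apply: mem_all_pairs; lia.
have hN := N_ge2 k l hk.
have hi : 1 <= 1 <= Npairs k l by lia.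
have [_ _ hs hr] := pair_props _ _ _ hi; rewrite /Npairs in hN.
have := sorted_leq_nth lerp_trans lerp_refl ([::], [::]) (sorted_L k l).
move=> /(_ 0 (index ([::], [:: 1]) (sorted_pairs k l))).
rewrite !inE index_mem h1 nth_index // => /(_ ltac:(lia) isT isT).
move: hs hr; rewrite /pairP /pairR /lerp /=.
case: (nth _ _ 0) => P [|r R] //= _ hr.
have := hr r; rewrite inE eqxx => /(_ isT) hr1.
case/orP => [lt|/andP[/eqP [] e]]; first by move: lt; rewrite ltz_nat; lia.
by case: R {hr}; case: P.
Qed.

Lemma last_R k l : 2 <= k -> nth 0 (pairR k l (Npairs k l)) 0 = k.
Proof.
move=> hk.
have h1 : ([::], [:: k]) \in sorted_pairs k l.
  by rewrite /sorted_pairs mem_sort; apply: mem_all_pairs; lia.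
have hN := N_ge2 k l hk.
have hi : 1 <= Npairs k l <= Npairs k l by lia.
have [_ _ hs hr] := pair_props _ _ _ hi.
have := sorted_leq_nth lerp_trans lerp_refl ([::], [::]) (sorted_L k l).
move=> /(_ (index ([::], [:: k]) (sorted_pairs k l)) (Npairs k l).-1).
rewrite !inE index_mem h1 nth_index //.
have hN' : 1 < size (sorted_pairs k l) by exact: hN.
have i1 : (Npairs k l).-1 < size (sorted_pairs k l).
  by rewrite /Npairs (prednK (ltnW hN')); exact: leqnn.
have i2 : index ([::], [:: k]) (sorted_pairs k l) <= (Npairs k l).-1.
  by rewrite /Npairs -ltnS (prednK (ltnW hN')) index_mem.
move=> /(_ isT i1 i2).
move: hs hr; rewrite /pairP /pairR /lerp /=.
case: (nth _ _ _) => P [|r R] //= _ hr.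
have := hr r; rewrite inE eqxx => /(_ isT) hr1.
case/orP => [lt|/andP[/eqP [] e _]]; first by move: lt; rewrite ltz_nat; lia.
by [].
Qed.
Set Implicit Arguments. Unset Strict Implicit.

Definition reach Q S (M : twoDFA Q S) w c := exists n, run M w n = Some c.

Lemma reach_step Q S (M : twoDFA Q S) w c c' :
  reach M w c -> step M w c = Some c' -> reach M w c'.
Proof. by case=> n hn hs; exists n.+1; rewrite /= hn. Qed.

Lemma tape_sym n pos : 1 <= pos <= n ->
  tape_at (iota 1 n) pos = Some (Sym pos).
Proof.
move=> hp; rewrite /tape_at size_iota.
have -> : (pos == 0) = false by apply/eqP; lia.
have -> : (pos == n.+1) = false by apply/eqP; lia.
have -> : pos <= n by lia.
rewrite drop_iota.
have -> : n - pos.-1 = (n - pos).+1 by lia.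
by rewrite /= (_ : 1 + pos.-1 = pos) //; lia.
Qed.

Section Main.
Variables (k l : nat).
Hypothesis hk : 1 < k.
Let N := Npairs k l.
Let w := iota 1 N.-1.

Lemma inner i j : 1 <= i <= N.-1 -> j <= size (pairP k l i) ->
  reach (A k l) w ((true, nth 0 (pairR k l i) j), i) ->
  reach (A k l) w ((true, nth 0 (pairR k l i) (size (pairP k l i))), i).
Proof.
move=> hi; have hN := N_ge2 k l hk.
have [uP uR sR _] := pair_props k l i ltac:(rewrite /N in hi; lia).
move=> hj; move eqd : (size (pairP k l i) - j) => d.
elim: d j hj eqd => [|d IH] j hj eqd.
  by have -> : j = size (pairP k l i) by lia.
move=> hr; apply: (IH j.+1); [clear -eqd; lia|clear -eqd; lia|].
have hjP : j < size (pairP k l i) by lia.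
have i2 : 2 <= i.
  have : i != 1 by apply/eqP => e; move: hjP; rewrite e first_P.
  move: hi; rewrite /N; lia.
case: i i2 hi hj hjP hr uP uR sR {IH eqd} => [|i] // i2 hi _ hjP hr uP uR sR.
set r := nth 0 (pairR k l i.+1) j.
set p := nth 0 (pairP k l i.+1) j.
have hjR : j < size (pairR k l i.+1) by rewrite sR; lia.
have rin : r \in pairR k l i.+1 by apply: mem_nth; exact: hjR.
have pin : p \in pairP k l i.+1 by apply: mem_nth; exact: hjP.
apply: (reach_step (c := ((false, p), i))).
  apply: (reach_step hr).
  rewrite /step tape_sym; last by rewrite /N in hi; lia.
  rewrite /= /deltaA.
  have -> : (i < (Npairs k l).-1) = true by move: hi; rewrite /N; lia.
  by rewrite mem_nth // index_uniq // hjP.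
rewrite /step tape_sym; last by rewrite /N in hi; lia.
rewrite /= /deltaA.
have -> : (0 < i <= (Npairs k l).-1) = true by move: hi; rewrite /N; lia.
by rewrite mem_nth // index_uniq.
Qed.
End Main.
Set Implicit Arguments. Unset Strict Implicit.

Lemma outer k l (hk : 1 < k) i : 1 <= i <= Npairs k l ->
  reach (A k l) (iota 1 (Npairs k l).-1) ((true, nth 0 (pairR k l i) 0), i).
Proof.
have hN := N_ge2 k l hk.
elim: i => [|i IH] // hi.
case: i IH hi => [|i] IH hi.
  exists 1; by [].
have hi' : 1 <= i.+1 <= (Npairs k l).-1 by lia.
have [uP uR sR _] := pair_props k l i.+1 ltac:(lia).
have := inner hk hi' (leq0n _) (IH ltac:(lia)) => hr.
apply: (reach_step hr).
rewrite /step tape_sym //= /deltaA.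
have -> : (i < (Npairs k l).-1) = true by lia.
rewrite mem_nth; last by rewrite sR.
by rewrite index_uniq ?sR // ltnn.
Qed.

Theorem mainTheorem4 (k l : nat) (hk : (2 <= k)%N) :
  accepts (A k l) (iota 1 (Npairs k l).-1).
Proof.
have hN := N_ge2 k l hk.
have hi : 1 <= Npairs k l <= Npairs k l by rewrite leqnn andbT; exact: ltnW hN.
have [n hn] := outer hk hi.
exists n, (true, k); split; last by rewrite /= eqxx.
rewrite hn last_R // size_iota prednK //; lia.
Qed.
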